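(* Fix a nonnegative integer $n$ and define \[ \widetilde{T}_n(a,c)=(1+a-c)_n(c)_n\,{}_3F_2\!\left(\left.{-n,\frac{a}{2},\frac{a+1}{2} \atop 1+a-c,c}\right| 4\right). \] Then, whenever both sides are defined, \[ {}_3F_2\!\left(\left.{-n,\frac{a}{2},\frac{a+1}{2} \atop 1+a-c,c}\right| 4\right) =\frac{(-1)^n(a)_n}{(1+a-c)_n}\,{}_3F_2\!\left(\left.{-n,\frac{c-a-n}{2},\frac{c-a-n+1}{2} \atop 1-a-n,c}\right| 4\right), \] so $\widetilde{T}_n(a,c)=\widetilde{T}_n(c-a-n,c)$. The group of transformations of $(a,c)$ generated by $(a,c)\mapsto(a,1+a-c)$ and $(a,c)\mapsto(c-a-n,c)$ is isomorphic to $S_3$ and yields the six invariances $\widetilde{T}_n(a,c)=\widetilde{T}_n(a,c)=\widetilde{T}_n(a,1+a-c)=\widetilde{T}_n(c-a-n,c)=\widetilde{T}_n(c-a-n,1-a-n)=\widetilde{T}_n(1-c-n,1+a-c)=\widetilde{T}_n(1-c-n,1-a-n)$. Moreover, the function \[ \widetilde{U}_n(x,y,z)=\widetilde{T}_n\!\left(\frac{1+2x-y-z-2n}{3},\frac{2+x+y-2z-n}{3}\right) \] is invariant under all six permutations of $x,y,z$.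
   Context: For $a\in\mathbb{C}$, $(a)_0=1$ and $(a)_k=a(a+1)\cdots(a+k-1)$ for $k\ge1$. The hypergeometric series is ${}_rF_s\!\left(\left.{\alpha_1,\ldots,\alpha_r\atop \beta_1,\ldots,\beta_s}\right|z\right)=\sum_{k\ge0}\frac{(\alpha_1)_k\cdots(\alpha_r)_k}{k!(\beta_1)_k\cdots(\beta_s)_k}z^k$, with no lower parameter zero or a negative integer; when an upper parameter is $-n$ it is a finite sum over $0\le k\le n$. *)

(* Defs.v *)
From mathcomp Require Import all_boot all_algebra.
From mathcomp Require Import reals complex.
Set Implicit Arguments. Unset Strict Implicit. Unset Printing Implicit Defensive.
Import GRing.Theory Num.Theory.
Local Open Scope ring_scope.

Definition poch {F : fieldType} (x : F) (k : nat) : F :=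
  \prod_(i < k) (x + i%:R).

Definition F32 {F : fieldType} (n : nat) (a1 a2 b1 b2 z : F) : F :=
  \sum_(k < n.+1)
    (poch (- n%:R) k * poch a1 k * poch a2 k)
    / (k`!%:R * poch b1 k * poch b2 k) * z ^+ k.

Definition admissible {F : fieldType} (b : F) : Prop :=
  forall m : nat, b <> - m%:R.

Definition Tt {F : fieldType} (n : nat) (a c : F) : F :=
  poch (1 + a - c) n * poch c n *
  F32 n (a / 2%:R) ((a + 1) / 2%:R) (1 + a - c) c 4%:R.

Definition Tt_defined {F : fieldType} (a c : F) : Prop :=
  admissible (1 + a - c) /\ admissible c.

Definition Ut {F : fieldType} (n : nat) (x y z : F) : F :=
  Tt n ((1 + 2%:R * x - y - z - 2%:R * n%:R) / 3%:R)
       ((2%:R + x + y - 2%:R * z - n%:R) / 3%:R).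

Definition Ut_defined {F : fieldType} (n : nat) (x y z : F) : Prop :=
  Tt_defined ((1 + 2%:R * x - y - z - 2%:R * n%:R) / 3%:R)
             ((2%:R + x + y - 2%:R * z - n%:R) / 3%:R).

Definition g1 {F : fieldType} (n : nat) (p : F * F) : F * F :=
  (p.1, 1 + p.1 - p.2).
Definition g2 {F : fieldType} (n : nat) (p : F * F) : F * F :=
  (p.2 - p.1 - n%:R, p.2).

(* Main.v *)
Require Import Defs.
From mathcomp Require Import all_boot all_algebra.
From mathcomp Require Import reals complex.
From mathcomp Require Import ring.
Set Implicit Arguments. Unset Strict Implicit. Unset Printing Implicit Defensive.
Import GRing.Theory Num.Theory.
Local Open Scope ring_scope.

Section Aux.
Variable F : numFieldType.
Implicit Types (x u v a b c : F).

Lemma pochSr x k : poch x k.+1 = poch x k * (x + k%:R).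
Proof. by rewrite /poch big_ord_recr. Qed.

Lemma poch0 x : poch x 0 = 1.
Proof. by rewrite /poch big_ord0. Qed.

Lemma pochSl x k : poch x k.+1 = x * poch (x + 1) k.
Proof.
rewrite /poch big_ord_recl /= addr0; congr (_ * _).
by apply: eq_bigr => i _; rewrite /bump /= add1n -addrA nat1r.
Qed.

Lemma pochD x k m : poch x (k + m) = poch x k * poch (x + k%:R) m.
Proof.
elim: m => [|m IH]; first by rewrite addn0 poch0 mulr1.
by rewrite addnS !pochSr IH natrD addrA mulrA.
Qed.

Definition G (n : nat) u v : F :=
  \sum_(k < n.+1) (-1) ^+ k * ('C(n, k))%:R * poch (u + v - 1) (2 * k)
     * poch (u + k%:R) (n - k) * poch (v + k%:R) (n - k).

Lemma pt (u v A B D E P Q c0 c1 sg K N : F) :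
  (u+N)*P = (u+K)*A -> (v+N)*Q = (v+K)*B -> (u+v-1)*E = D*(u+v-1+(K+K)) ->
  sg*(c0+c1)*D*((u+K)*A)*((v+K)*B) =
  ((v+N)*(1-u-v)*(sg*c0*E*A*Q) + (u+N)*(1-u-v)*(sg*c0*E*P*B) + (u+N)*(v+N)*(sg*c0*D*P*Q))
  - ((-1 * sg)*c0*(D*(u+v-1+(K+K))*(u+v-1+(K+K)+1))*A*B - sg*c1*D*((u+K)*A)*((v+K)*B)).
Proof.
move=> hP hQ hE.
have e1 : (v+N)*(1-u-v)*(sg*c0*E*A*Q) = - (sg*c0*A*((u+v-1)*E)*((v+N)*Q)) by ring.
have e2 : (u+N)*(1-u-v)*(sg*c0*E*P*B) = - (sg*c0*B*((u+v-1)*E)*((u+N)*P)) by ring.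
have e3 : (u+N)*(v+N)*(sg*c0*D*P*Q) = sg*c0*D*((u+N)*P)*((v+N)*Q) by ring.
rewrite e1 e2 e3 hP hQ hE; ring.
Qed.

Lemma lin_eq (X Y a b : F) : a = b -> X - Y = a - b -> X = Y.
Proof. by move=> -> /eqP; rewrite subrr subr_eq0 => /eqP. Qed.


Lemma Grec n u v : G n.+1 u v =
  (v + n%:R) * (1 - u - v) * G n (u+1) v + (u + n%:R) * (1 - u - v) * G n u (v+1)
  + (u + n%:R) * (v + n%:R) * G n u v.
Proof.
rewrite /G.
rewrite (_ : u + 1 + v - 1 = u + v - 1 + 1); last by ring.
rewrite (_ : u + (v + 1) - 1 = u + v - 1 + 1); last by ring.
set H := fun k : nat => (-1) ^+ k * ((if k is k'.+1 then 'C(n, k') else 0)%:R : F)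
   * poch (u + v - 1) (2 * k) * poch (u + k%:R) (n.+1 - k) * poch (v + k%:R) (n.+1 - k).
have tel : \sum_(i < n.+1) (H i - H i.+1) = H 0%N - H n.+1.
  rewrite -(big_mkord xpredT (fun i => H i - H i.+1)).
  transitivity (- \sum_(0 <= i < n.+1) (H i.+1 - H i)).
    by rewrite -sumrN; apply: eq_bigr => i _; rewrite opprB.
  by rewrite telescope_sumr // opprB.
rewrite big_ord_recr /= !mulr_sumr -!big_split /=.
apply/eqP; rewrite -subr_eq0 addrAC -sumrB.
rewrite (eq_bigr (fun i : 'I_n.+1 => H i - H i.+1)).
  by rewrite tel /H /= subnn !poch0 !binn !mulr0 !mul0r sub0r addNr.
move=> [k hk] _ /=.
have hkn : (k <= n)%N by [].
have e : forall w : F, w + 1 + k%:R = w + k.+1%:R.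
  by move=> w; rewrite -addrA nat1r.
have e' : forall w : F, w + k%:R + 1 = w + k.+1%:R.
  by move=> w; rewrite -addrA natr1.
have hb : ('C(n.+1, k)%:R : F) = 'C(n, k)%:R + (if k is k'.+1 then 'C(n, k') else 0)%:R.
  by case: (k) => [|k']; rewrite ?bin0 ?binS ?natrD ?addr0.
have hP : (u + n%:R) * poch (u + k%:R) (n - k) = (u + k%:R) * poch (u + k.+1%:R) (n - k).
  rewrite -e' -pochSl pochSr mulrC; congr (_ * _); rewrite natrB //; ring.
have hQ : (v + n%:R) * poch (v + k%:R) (n - k) = (v + k%:R) * poch (v + k.+1%:R) (n - k).
  rewrite -e' -pochSl pochSr mulrC; congr (_ * _); rewrite natrB //; ring.
have hE : (u + v - 1) * poch (u + v - 1 + 1) (2 * k) =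
   poch (u + v - 1) (2 * k) * (u + v - 1 + (k%:R + k%:R)).
  by rewrite -pochSl pochSr mul2n -addnn natrD.
rewrite /H; cbv beta iota.
rewrite !subSS (subSn hkn) (pochSl (u + k%:R)) (pochSl (v + k%:R)) !e !e' hb.
rewrite (_ : (2 * k.+1 = (2 * k).+2)%N); last by rewrite mulnS.
rewrite (pochSr (u + v - 1) (2 * k).+1) (pochSr (u + v - 1) (2 * k)) exprS.
rewrite (_ : ((2 * k).+1%:R : F) = k%:R + k%:R + 1); last by rewrite -natr1 mul2n -addnn natrD.
rewrite (_ : ((2 * k)%:R : F) = k%:R + k%:R); last by rewrite mul2n -addnn natrD.
apply: (lin_eq (@pt _ _ _ _ _ _ _ _ ('C(n, k)%:R)
   ((if k is k'.+1 then 'C(n, k') else 0)%:R) ((-1) ^+ k) _ _ hP hQ hE)).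
ring.
Qed.

Lemma Gswap n u v : G n u v = G n v u.
Proof.
rewrite /G; apply: eq_bigr => k _; rewrite (addrC v u).
by rewrite -!mulrA; congr (_ * (_ * (_ * _))); rewrite mulrC.
Qed.

Lemma Gsym n : forall u v w, u + v + w = 2%:R - n%:R -> G n u v = G n w v.
Proof.
elim: n => [|n IH] u v w h.
  by rewrite /G !big_ord1 /= !poch0.
have hw : w = (u + v + w) - u - v by ring.
rewrite h -natr1 in hw.
have E1 : G n (u + 1) v = G n w v by apply: IH; rewrite hw; ring.
have E2 : G n u (v + 1) = G n w (v + 1) by apply: IH; rewrite hw; ring.
have E3 : G n u v = G n (w + 1) v by apply: IH; rewrite hw; ring.
rewrite !Grec E1 E2 E3 hw; ring.
Qed.

Lemma Gall n x y z : x + y + z = 2%:R - n%:R ->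
  G n x y = G n y x /\ G n x y = G n z y /\ G n x y = G n x z /\
  G n x y = G n z x /\ G n x y = G n y z.
Proof.
move=> h.
have h1 : G n x y = G n z y by apply: Gsym.
have h2 : G n y x = G n z x by apply: Gsym; rewrite -h; ring.
split; first exact: Gswap.
split; first exact: h1.
split; first by rewrite Gswap h2 Gswap.
split; first by rewrite Gswap h2.
by rewrite h1 Gswap.
Qed.

Lemma poch_negn n k : (k <= n)%N -> poch (- n%:R : F) k = (-1) ^+ k * (n ^_ k)%:R.
Proof.
elim: k => [|k IH] hk; first by rewrite poch0 expr0 ffactn0 mulr1.
rewrite pochSr IH ?(ltnW hk) // exprS ffactnSr natrM natrB ?(ltnW hk) //; ring.
Qed.

Lemma two_neq0 : (2%:R : F) != 0. Proof. by rewrite pnatr_eq0. Qed.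

Lemma poch_half a k : poch (a / 2%:R) k * poch ((a + 1) / 2%:R) k * 4%:R ^+ k = poch a (2 * k).
Proof.
elim: k => [|k IH]; first by rewrite !poch0 expr0 !mulr1.
rewrite (_ : (2 * k.+1 = (2 * k).+2)%N); last by rewrite mulnS.
rewrite !pochSr -IH exprS -natr1 mul2n -addnn natrD.
have := two_neq0; move=> h2.
by field.
Qed.

Lemma poch_neq0 b k : admissible b -> poch b k != 0.
Proof.
move=> hb; rewrite /poch; apply/prodf_neq0 => i _; apply/eqP => h.
by apply: (hb i); apply/eqP; rewrite -addr_eq0 h.
Qed.

Lemma poch_refl a n : poch (1 - a - n%:R) n = (-1) ^+ n * poch a n.
Proof.
elim: n => [|n IH]; first by rewrite !poch0 expr0 mulr1.
rewrite pochSl (_ : 1 - a - n.+1%:R + 1 = 1 - a - n%:R); last by rewrite -natr1; ring.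
rewrite IH pochSr exprS -natr1; ring.
Qed.

Lemma TtG n a c : admissible (1 + a - c) -> admissible c -> Tt n a c = G n (1 + a - c) c.
Proof.
move=> hb hc; rewrite /Tt /F32 /G mulr_sumr; apply: eq_bigr => [[k hk]] _ /=.
have hkn : (k <= n)%N by [].
rewrite (_ : 1 + a - c + c - 1 = a); last by ring.
rewrite -(poch_half a k) poch_negn //.
have sb : forall x, poch x n = poch x k * poch (x + k%:R) (n - k).
  by move=> x; rewrite -pochD subnKC.
rewrite (sb (1 + a - c)) (sb c).
rewrite -bin_ffact natrM.
have h1 := poch_neq0 k hb; have h2 := poch_neq0 k hc.
have h3 : (k`!%:R : F) != 0 by rewrite pnatr_eq0 -lt0n fact_gt0.
field.
by rewrite h3 h1 h2.
Qed.

End Aux.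

Lemma TtG' (F : numFieldType) n (a c p : F) : Tt_defined a c -> 1 + a - c = p -> Tt n a c = G n p c.
Proof. by move=> [h1 h2] <-; apply: TtG. Qed.

Lemma UtG (F : numFieldType) n (x y z s : F) : s = x + y + z -> Ut_defined n x y z ->
  Ut n x y z = G n ((2%:R - n%:R + s) / 3%:R - y) ((2%:R - n%:R + s) / 3%:R - z).
Proof.
move=> hs hd; rewrite /Ut (TtG' n hd erefl).
have h3 : (3%:R : F) != 0 by rewrite pnatr_eq0.
congr (G n _ _); rewrite hs; by field; rewrite ?h3.
Qed.

Theorem mainTheorem7 (R : realType) (n : nat) :
  (* the 3F2 transformation, whenever both sides are defined *)
  (forall a c : R[i],
     admissible (1 + a - c) -> admissible c -> admissible (1 - a - n%:R) ->
     F32 n (a / 2%:R) ((a + 1) / 2%:R) (1 + a - c) c 4%:R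
     = (-1) ^+ n * poch a n / poch (1 + a - c) n *
       F32 n ((c - a - n%:R) / 2%:R) ((c - a - n%:R + 1) / 2%:R)
             (1 - a - n%:R) c 4%:R)
  /\
  (* hence T~_n(a,c) = T~_n(c-a-n,c) whenever both sides are defined *)
  (forall a c : R[i],
     Tt_defined a c -> Tt_defined (c - a - n%:R) c ->
     Tt n a c = Tt n (c - a - n%:R) c)
  /\
  (* the group generated by g1, g2 is isomorphic to S_3:
     two involutions whose product has order 3 and which do not commute *)
  (forall p : R[i] * R[i], g1 n (g1 n p) = p)
  /\ (forall p : R[i] * R[i], g2 n (g2 n p) = p)
  /\ (forall p : R[i] * R[i],
        g1 n (g2 n (g1 n (g2 n (g1 n (g2 n p))))) = p)
  /\ ~ (forall p : R[i] * R[i], g1 n (g2 n p) = g2 n (g1 n p))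
  /\
  (* the six invariances, whenever all terms are defined *)
  (forall a c : R[i],
     Tt_defined a c -> Tt_defined a (1 + a - c) ->
     Tt_defined (c - a - n%:R) c -> Tt_defined (c - a - n%:R) (1 - a - n%:R) ->
     Tt_defined (1 - c - n%:R) (1 + a - c) -> Tt_defined (1 - c - n%:R) (1 - a - n%:R) ->
     Tt n a c = Tt n a (1 + a - c)
     /\ Tt n a c = Tt n (c - a - n%:R) c
     /\ Tt n a c = Tt n (c - a - n%:R) (1 - a - n%:R)
     /\ Tt n a c = Tt n (1 - c - n%:R) (1 + a - c)
     /\ Tt n a c = Tt n (1 - c - n%:R) (1 - a - n%:R))
  /\
  (* U~_n is invariant under all six permutations of (x,y,z) *)
  (forall x y z : R[i],
     Ut_defined n x y z -> Ut_defined n x z y -> Ut_defined n y x z ->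
     Ut_defined n y z x -> Ut_defined n z x y -> Ut_defined n z y x ->
     Ut n x y z = Ut n x z y
     /\ Ut n x y z = Ut n y x z
     /\ Ut n x y z = Ut n y z x
     /\ Ut n x y z = Ut n z x y
     /\ Ut n x y z = Ut n z y x).

Proof.
have h3 : (3%:R : R[i]) != 0 by rewrite pnatr_eq0.
split.
  move=> a c hb hc hw.
  have T1 := TtG n hb hc.
  have hb' : admissible (1 + (c - a - n%:R) - c).
    by rewrite (_ : 1 + (c - a - n%:R) - c = 1 - a - n%:R) //; ring.
  have T2 := TtG n hb' hc.
  have GE : G n (1 + a - c) c = G n (1 + (c - a - n%:R) - c) c.
    by apply: Gsym; ring.
  have E : Tt n a c = Tt n (c - a - n%:R) c by rewrite T1 T2 GE.
  move: E; rewrite /Tt (_ : 1 + (c - a - n%:R) - c = 1 - a - n%:R); last by ring.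
  rewrite poch_refl => E.
  have hpb := poch_neq0 n hb; have hpc := poch_neq0 n hc.
  apply: (mulfI (mulf_neq0 hpb hpc)).
  rewrite E; by field; rewrite ?hpb.
split.
  move=> a c h1 h2.
  rewrite (TtG' n h1 erefl) (TtG' n h2 erefl); apply: Gsym; ring.
split; first by move=> [a c]; rewrite /g1 /=; congr pair; ring.
split; first by move=> [a c]; rewrite /g2 /=; congr pair; ring.
split; first by move=> [a c]; rewrite /g1 /g2 /=; congr pair; ring.
split.
  move=> /(_ (0, 0)); rewrite /g1 /g2 /= => [[]] /eqP.
  move=> h _; move: (oner_neq0 R[i]); apply/negP; rewrite negbK.
  rewrite -subr_eq0 (_ : 1 - 0 = (1 + 0 - 0 - 0 - n%:R) - (0 - 0 - n%:R)); last by ring.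
  by rewrite subr_eq0 eq_sym.
split.
  move=> a c d1 d2 d3 d4 d5 d6.
  have [A1 [A2 [A3 [A4 A5]]]] := Gall (x := 1 + a - c) (y := c) (z := 1 - a - n%:R) (n := n)
     ltac:(ring).
  rewrite (TtG' n d1 erefl) (TtG' n d2 (_ : _ = c)); last by ring.
  rewrite (TtG' n d3 (_ : _ = 1 - a - n%:R)); last by ring.
  rewrite (TtG' n d4 (_ : _ = c)); last by ring.
  rewrite (TtG' n d5 (_ : _ = 1 - a - n%:R)); last by ring.
  rewrite (TtG' n d6 (_ : _ = 1 + a - c)); last by ring.
  split; first exact: A1. split; first exact: A2. split; first exact: A5.
  split; first exact: A4. exact: A3.
move=> x y z d1 d2 d3 d4 d5 d6.
set s := x + y + z.
rewrite (UtG erefl d1) (UtG (s := s) _ d2); last by rewrite /s; ring.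
rewrite (UtG (s := s) _ d3); last by rewrite /s; ring.
rewrite (UtG (s := s) _ d4); last by rewrite /s; ring.
rewrite (UtG (s := s) _ d5); last by rewrite /s; ring.
rewrite (UtG (s := s) _ d6); last by rewrite /s; ring.
set d := (2%:R - n%:R + s) / 3%:R.
have [A1 [A2 [A3 [A4 A5]]]] := Gall (x := d - y) (y := d - z) (z := d - x) (n := n)
   ltac:(rewrite /d /s; by field; rewrite ?h3).
split; first exact: A1. split; first exact: A2. split; first exact: A5.
split; first exact: A4. exact: A3.
Qed.
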